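(* Let $G=(V,E)$ be a finite simple graph. If the graphic matroid of $G$ has a rainbow circuit-free coloring in which each color is used at most twice, then $G$ is $(2,3)$-sparse.
   Context: The graphic matroid of $G$ has ground set $E$, independent sets being the edge sets of forests; its circuits are the edge sets of cycles. A coloring of $E$ is a partition into nonempty color classes; it is rainbow circuit-free if no cycle of $G$ has all its edges of pairwise different colors. $G$ is $(2,3)$-sparse if $|E[X]|\leq 2|X|-3$ for every $X\subseteq V$ with $|X|\geq 2$, where $E[X]$ is the set of edges with both endpoints in $X$. *)

(* Defs.v *)
From mathcomp Require Import all_boot.
Set Implicit Arguments. Unset Strict Implicit. Unset Printing Implicit Defensive.

Definition simple_graph (V : finType) (adj : rel V) :=
  symmetric adj /\ irreflexive adj.

Definition edges (V : finType) (adj : rel V) : {set {set V}} :=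
  [set e : {set V} | [exists x, exists y, adj x y && (e == [set x; y])]].

Definition induced_edges (V : finType) (adj : rel V) (X : {set V}) :
  {set {set V}} := [set e in edges adj | e \subset X].

Definition sparse23 (V : finType) (adj : rel V) :=
  forall X : {set V}, 2 <= #|X| -> #|induced_edges adj X| <= 2 * #|X| - 3.

Definition is_cycle (V : finType) (adj : rel V) (s : seq V) :=
  [&& uniq s, 3 <= size s & cycle adj s].

Definition cycle_edges (V : finType) (s : seq V) : {set {set V}} :=
  [set:: [seq [set p.1; p.2] | p <- zip s (rot 1 s)]].

(* Circuits of the graphic matroid: edge sets of cycles. *)
Definition circuit (V : finType) (adj : rel V) (C : {set {set V}}) :=
  exists s, is_cycle adj s /\ C = cycle_edges s.

(* A coloring of E is a partition P of E into nonempty classes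
   (finset's [partition P E] requires set0 \notin P).  The color of e is
   its block pblock P e. *)
Definition coloring (V : finType) (adj : rel V) (P : {set {set {set V}}}) :=
  partition P (edges adj).

Definition rainbow (V : finType) (P : {set {set {set V}}}) (C : {set {set V}}) :=
  forall e f, e \in C -> f \in C -> e != f -> pblock P e != pblock P f.

Definition rainbow_circuit_free (V : finType) (adj : rel V)
  (P : {set {set {set V}}}) :=
  forall C, circuit adj C -> ~ rainbow P C.

(* Main.v *)
Require Import Defs.
From mathcomp Require Import all_boot zify.
Set Implicit Arguments. Unset Strict Implicit. Unset Printing Implicit Defensive.

Lemma edge_card (V : finType) (adj : rel V) e :
  simple_graph adj -> e \in edges adj -> #|e| = 2.
Proof.
move=> [sy ir]; rewrite inE => /existsP[x /existsP[y /andP[axy /eqP->]]].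
rewrite cards2; case: eqP => // exy; by rewrite exy ir in axy.
Qed.

Lemma edge_adj (V : finType) (adj : rel V) x y :
  simple_graph adj -> [set x; y] \in edges adj -> adj x y.
Proof.
move=> [sy ir] H; have c2 := edge_card (conj sy ir) H.
move: H; rewrite inE => /existsP[a /existsP[b /andP[aab /eqP E]]].
have xy : x != y by apply/negP => /eqP exy; move: c2; rewrite exy setUid cards1.
have : x \in [set a; b] by rewrite -E !inE eqxx.
have : y \in [set a; b] by rewrite -E !inE eqxx orbT.
rewrite !inE => /orP[] /eqP ey /orP[] /eqP ex; subst => //.
- by rewrite eqxx in xy.
- by rewrite sy.
- by rewrite eqxx in xy.
Qed.

Lemma edge_eq2 (V : finType) (adj : rel V) e v w :
  simple_graph adj -> e \in edges adj -> v \in e -> w \in e -> v != w ->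
  e = [set v; w].
Proof.
move=> sg He hv hw vw; apply/esym/eqP; rewrite eqEcard.
rewrite (edge_card sg He) cards2 vw /= leqnn andbT.
by apply/subsetP => z; rewrite !inE => /orP[] /eqP->.
Qed.
Lemma last_take1 (T : Type) (q : seq T) (a : T) j :
  j < size q -> last a (take j.+1 q) = nth a q j.
Proof.
elim: q a j => [|x q IH] a [|j] //= hj; first by rewrite take0.
by rewrite IH // (set_nth_default a).
Qed.

Lemma close_cycle (V:finType) (r : rel V) z a rest' w :
  symmetric r -> irreflexive r -> uniq [:: z, a & rest'] ->
  path r z (a :: rest') -> r z w -> w != a -> w \in [:: z, a & rest'] ->
  exists c, [/\ uniq c, 2 < size c & cycle r c].
Proof.
move=> sy ir us pr rzw wa ws.
have wz : w != z by apply/eqP => E; rewrite E ir in rzw.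
have wr : w \in rest' by move: ws; rewrite !inE (negPf wz) (negPf wa).
set j := index w rest'.
have jlt : j < size rest' by rewrite index_mem.
exists (take j.+3 [:: z, a & rest']); split.
- exact: take_uniq.
- by rewrite size_take /=; case: ifP => //; rewrite ltnS ltnS; case: (size rest') jlt.
- move: pr => /= /andP[rza pr'].
  by rewrite rcons_path rza take_path //= last_take1 // nth_index // sy.
Qed.

Lemma uniq_size_le (V : finType) (s : seq V) : uniq s -> size s <= #|V|.
Proof. by move/card_uniqP <-; exact: max_card. Qed.

Lemma path_cycle (V:finType) (r : rel V) (Y : {set V}) :
  symmetric r -> irreflexive r ->
  (forall z, z \in Y -> 1 < #|[set w | r z w]|) ->
  (forall z w, r z w -> w \in Y) ->
  forall k z rest, #|V| - size (z :: rest) <= k -> z \in Y ->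
  uniq (z :: rest) -> path r z rest ->
  exists c, [/\ uniq c, 2 < size c & cycle r c].
Proof.
move=> sy ir deg2 inY; elim=> [|k IH] z rest hk zY us pr.
all: case: (boolP [exists w, r z w && (w \notin z :: rest)]).
1,3: move=> /existsP[w /andP[rzw wn]].
- have : uniq (w :: z :: rest) by rewrite cons_uniq wn us.
  move/uniq_size_le.
  move: hk => /=; lia.
- apply: (IH w (z :: rest)); rewrite ?cons_uniq ?wn ?us ?(inY z w) //=.
  + by move: hk => /=; lia.
  + by rewrite sy rzw pr.
all: move=> /existsPn nb.
all: have [w1 [w2 [h1 h2 w12]]] := card_gt1P (deg2 _ zY).
all: move: h1 h2; rewrite !inE => h1 h2.
all: have i1 := nb w1; have i2 := nb w2; rewrite h1 /= negbK in i1; rewrite h2 /= negbK in i2.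
all: clear nb; case: rest us pr i1 i2 {hk} => [|a rest'] us pr i1 i2.
all: try (by move: i1; rewrite inE => /eqP E; rewrite E ir in h1).
all: case: (eqVneq w1 a) => [E|w1a]; last exact: (close_cycle sy ir us pr h1 w1a i1).
all: have w2a : w2 != a by rewrite -E eq_sym.
all: exact: (close_cycle sy ir us pr h2 w2a i2).
Qed.

Lemma zip_path (V : finType) (r : rel V) x q :
  path r x q -> forall a b, (a, b) \in zip (x :: q) q -> r a b.
Proof.
elim: q x => [|y q IH] x //= /andP[rxy pq] a b; rewrite inE => /orP[/eqP[-> ->] //|].
exact: IH.
Qed.

Lemma zip_rcons (T : eqType) x (p : seq T) y :
  zip (x :: p) (rcons p y) = zip (x :: rcons p y) (rcons p y).
Proof. by elim: p x => [|a p IH] x //=; rewrite IH. Qed.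

Lemma cycle_edges_rel (V : finType) (r : rel V) (c : seq V) e :
  cycle r c -> e \in cycle_edges c -> exists a b, r a b /\ e = [set a; b].
Proof.
case: c => [|x p]; first by rewrite /cycle_edges /= inE.
rewrite /cycle_edges /= => cyc; rewrite inE => /mapP[[a b] hab ->].
exists a, b; split => //; apply: (zip_path cyc).
by rewrite -zip_rcons -rot1_cons.
Qed.

Lemma dense_cycle (V : finType) (adj : rel V) : simple_graph adj ->
  forall n (Y : {set V}) (F : {set {set V}}), #|Y| = n ->
  {subset F <= edges adj} -> (forall e, e \in F -> e \subset Y) ->
  0 < #|F| -> #|Y| <= #|F| ->
  exists s, is_cycle adj s /\ {subset cycle_edges s <= F}.
Proof.
move=> sg; elim=> [|n IH] Y F cY FE FY /card_gt0P [e0 e0F] YF.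
  have := subset_leq_card (FY _ e0F).
  by rewrite cY (edge_card sg (FE _ e0F)).
pose r := [rel x y | [set x; y] \in F].
have sy : symmetric r by move=> x y; rewrite /= setUC.
have ir : irreflexive r.
  move=> x /=; apply/negP => /FE /(edge_card sg); by rewrite setUid cards1.
have inY : forall z w, r z w -> w \in Y.
  move=> z w /FY /subsetP; apply; by rewrite !inE eqxx orbT.
have radj : subrel r adj by move=> x y /FE /(edge_adj sg).
case: (boolP [exists y in Y, #|[set w | r y w]| <= 1]).
- move=> /exists_inP [y yY degy].
  set F' := [set e in F | y \notin e].
  have cY' : #|Y :\ y| = n by move: cY; rewrite (cardsD1 y) yY => -[].
  have sub : F \subset F' :|: [set [set y; w] | w in [set w | r y w]].
    apply/subsetP => e eF; rewrite !inE eF /=.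
    case: (boolP (y \in e)) => ye //=.
    have := edge_card sg (FE _ eF) => ce.
    have : 1 < #|e| by rewrite ce.
    move=> /card_gt1P [u [v [ue ve uv]]].
    have [w [we wy]] : exists w, w \in e /\ w != y.
      case: (eqVneq u y) => [Eu|uy]; last by exists u.
      by exists v; split => //; rewrite -Eu eq_sym.
    have Ee : e = [set y; w] by apply: (edge_eq2 sg (FE _ eF) ye we); rewrite eq_sym.
    by apply/imsetP; exists w; rewrite // inE /= -Ee.
  have cF : #|F| <= #|F'| + 1.
    apply: (leq_trans (subset_leq_card sub)); apply: (leq_trans (leq_card_setU _ _).1).
    by rewrite leq_add2l; exact: (leq_trans (leq_imset_card _ _) degy).
  have c2 : 2 <= #|Y|.
    by rewrite -(edge_card sg (FE _ e0F)); exact: subset_leq_card (FY _ e0F).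
  have F'pos : 0 < #|F'|.
    case: (posnP #|F'|) => // F'0; move: cF YF c2; rewrite F'0; lia.
  have FE' : {subset F' <= edges adj}.
    by move=> e; rewrite inE => /andP[/FE].
  have FY' : forall e, e \in F' -> e \subset Y :\ y.
    by move=> e; rewrite inE subsetD1 => /andP[/FY -> ->].
  have YF' : #|Y :\ y| <= #|F'| by rewrite cY'; move: cF YF; rewrite cY; lia.
  have [s [cs ss]] := IH (Y :\ y) F' cY' FE' FY' F'pos YF'.
  exists s; split => // e /ss; rewrite inE => /andP[] //.
- move=> nd.
  have deg2 : forall z, z \in Y -> 1 < #|[set w | r z w]|.
    move=> z zY; rewrite ltnNge; apply/negP => h.
    by move/negP: nd; apply; apply/exists_inP; exists z.
  have : 1 < #|e0| by rewrite (edge_card sg (FE _ e0F)).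
  move=> /card_gt1P [z [_ [ze _ _]]].
  have zY : z \in Y by move/subsetP: (FY _ e0F); apply.
  have [c [uc sc cc]] := path_cycle sy ir deg2 inY (leq_subr (size [:: z]) #|V|) zY isT isT.
  exists c; split; first by rewrite /is_cycle uc sc (sub_cycle radj cc).
  by move=> e /(cycle_edges_rel cc) [a [b [rab ->]]].
Qed.

Lemma pick_sat (T : finType) (p : pred T) d x : p x -> p (odflt d [pick y | p y]).
Proof. by case: pickP => [y //| H]; rewrite H. Qed.

Theorem theorem9 (V : finType) (adj : rel V) :
  simple_graph adj ->
  (exists P : {set {set {set V}}},
      [/\ coloring adj P, rainbow_circuit_free adj P &
          forall B, B \in P -> #|B| <= 2]) ->
  sparse23 adj.
Proof.
move=> sg [P [cP rcf P2]] X X2.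
move: cP => /and3P[/eqP covP tP nP].
rewrite leqNgt; apply/negP => big.
set Ex := induced_edges adj X.
have ExE : {subset Ex <= edges adj} by move=> e; rewrite inE => /andP[].
have ExX : forall e, e \in Ex -> e \subset X by move=> e; rewrite inE => /andP[].
have inpb : forall e, e \in edges adj -> e \in pblock P e.
  by move=> e; rewrite mem_pblock covP.
have pbP : forall e, e \in edges adj -> pblock P e \in P.
  by move=> e eE; apply: pblock_mem; rewrite covP.
have DL : forall (F : {set {set V}}) (Y : {set V}), {subset F <= edges adj} ->
    (forall e, e \in F -> e \subset Y) -> 0 < #|F| -> #|Y| <= #|F| ->
    {in F &, injective (pblock P)} -> False.
  move=> F Y FE FY F0 YF inj.
  have [s [cs ss]] := dense_cycle sg (erefl #|Y|) FE FY F0 YF.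
  apply: (rcf (cycle_edges s)); first by exists s.
  move=> e f /ss eF /ss fF ef; apply/negP => /eqP E.
  by move/eqP: ef; apply; apply: inj.
set K := [set pblock P e | e in Ex].
pose g B := odflt set0 [pick e | (e \in Ex) && (pblock P e == B)].
have gP : forall B, B \in K -> (g B \in Ex) /\ pblock P (g B) = B.
  move=> B /imsetP [e eEx ->].
  have := @pick_sat _ (fun e' => (e' \in Ex) && (pblock P e' == pblock P e)) set0 e.
  by rewrite eEx eqxx /= => /(_ isT) /andP[-> /eqP].
set F1 := [set g B | B in K].
have ginj : {in K &, injective g}.
  by move=> B B' hB hB' E; rewrite -(gP B hB).2 -(gP B' hB').2 E.
have cF1 : #|F1| = #|K| by rewrite card_in_imset.
have F1Ex : {subset F1 <= Ex} by move=> e /imsetP[B hB ->]; exact: (gP B hB).1.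
have pbinjF1 : {in F1 &, injective (pblock P)}.
  move=> e f /imsetP[B hB ->] /imsetP[B' hB' ->].
  by rewrite (gP B hB).2 (gP B' hB').2 => ->.
have Ex0 : 0 < #|Ex| by apply: leq_ltn_trans big.
have K0 : 0 < #|K|.
  by move/card_gt0P: Ex0 => [e eEx]; apply/card_gt0P; exists (pblock P e); apply: imset_f.
have KX : #|K| < #|X|.
  rewrite ltnNge; apply/negP => XK.
  apply: (DL F1 X) => //.
  - by move=> e /F1Ex /ExE.
  - by move=> e /F1Ex /ExX.
  - by rewrite cF1.
  - by rewrite cF1.
set Rest := Ex :\: F1.
have pbinjR : {in Rest &, injective (pblock P)}.
  move=> e f; rewrite !in_setD => /andP[eF1 eEx] /andP[fF1 fEx] E.
  set B := pblock P e.
  have hB : B \in K by exact: (imset_f (pblock P) eEx).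
  have gF1 : g B \in F1 by exact: (imset_f g hB).
  apply/eqP; apply/negPn/negP => ef.
  have sB : g B |: [set e; f] \subset B.
    apply/subsetP => x; rewrite !inE => /or3P[] /eqP->.
    - by rewrite -{2}(gP B hB).2; apply: inpb; apply: ExE; exact: (gP B hB).1.
    - by apply: inpb; apply: ExE.
    - by rewrite /B E; apply: inpb; apply: ExE.
  have := subset_leq_card sB.
  rewrite cardsU1 cards2 ef !inE negb_or.
  have -> : g B != e by apply/eqP => E'; rewrite -E' gF1 in eF1.
  have -> : g B != f by apply/eqP => E'; rewrite -E' gF1 in fF1.
  by move=> h; have := leq_trans h (P2 B (pbP e (ExE e eEx))).
have RK : [set pblock P e | e in Rest] \subset K.
  apply/subsetP => B /imsetP[e eR ->]; move: eR; rewrite in_setD => /andP[_ eEx].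
  exact: (imset_f (pblock P) eEx).
have cR : #|Rest| <= #|K| by rewrite -(card_in_imset pbinjR); exact: subset_leq_card.
have F1sub : F1 \subset Ex by apply/subsetP => e /F1Ex.
have cEx : #|Ex| = #|K| + #|Rest| by rewrite -(cardsID F1 Ex) (setIidPr F1sub) cF1.
have cRK : #|Rest| = #|K| by move: big cEx KX cR X2; rewrite -/Ex; lia.
have cKX : #|K| = #|X| - 1 by move: big cEx KX cR X2; rewrite -/Ex; lia.
have imR : [set pblock P e | e in Rest] = K.
  by apply/eqP; rewrite eqEcard RK /= (card_in_imset pbinjR) cRK.
pose h B := odflt set0 [pick e | (e \in Rest) && (pblock P e == B)].
have hP : forall B, B \in K -> (h B \in Rest) /\ pblock P (h B) = B.
  move=> B; rewrite -imR => /imsetP [e eR ->].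
  have := @pick_sat _ (fun e' => (e' \in Rest) && (pblock P e' == pblock P e)) set0 e.
  by rewrite eR eqxx /= => /(_ isT) /andP[-> /eqP].
have RestEx : forall e, e \in Rest -> e \in Ex by move=> e; rewrite in_setD => /andP[].
have ghne : forall B, B \in K -> g B != h B.
  move=> B hB; apply/eqP => E.
  have := (hP B hB).1; rewrite in_setD -E (imset_f g hB) //.
have own : forall v, v \in X -> [exists B in K, (v \in g B) && (v \in h B)].
  move=> v vX; case: (boolP [exists B in K, (v \in g B) && (v \in h B)]) => // nb; exfalso.
  pose t B := if v \in g B then h B else g B.
  have tQ : forall B, B \in K -> [/\ t B \in Ex, pblock P (t B) = B & v \notin t B].
    move=> B hB; rewrite /t; case: ifP => vg.
    - split; [exact: RestEx (hP B hB).1 | exact: (hP B hB).2 |].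
      apply/negP => vh; move/negP: nb; apply; apply/exists_inP; exists B => //.
      by rewrite vg.
    - by split; [exact: (gP B hB).1 | exact: (gP B hB).2 | rewrite vg].
  have tinj : {in K &, injective t}.
    move=> B B' hB hB' E; case: (tQ B hB) => _ e1 _; case: (tQ B' hB') => _ e2 _.
    by rewrite -e1 -e2 E.
  apply: (DL [set t B | B in K] (X :\ v)).
  - by move=> e /imsetP[B hB ->]; apply: ExE; case: (tQ B hB).
  - move=> e /imsetP[B hB ->]; case: (tQ B hB) => tEx _ vt.
    by rewrite subsetD1 vt ExX.
  - by rewrite card_in_imset.
  - by rewrite card_in_imset // cKX (cardsD1 v X) vX; lia.
  - move=> e f /imsetP[B hB ->] /imsetP[B' hB' ->].
    case: (tQ B hB) => _ -> _; by case: (tQ B' hB') => _ -> _ ->.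
pose o v := odflt set0 [pick B | (B \in K) && ((v \in g B) && (v \in h B))].
have oP : forall v, v \in X -> [/\ o v \in K, v \in g (o v) & v \in h (o v)].
  move=> v /own /exists_inP [B hB H].
  have := @pick_sat _ (fun B' => (B' \in K) && ((v \in g B') && (v \in h B'))) set0 B.
  by rewrite hB H => /(_ isT) /and3P[].
have oinj : {in X &, injective o}.
  move=> v w vX wX E; apply/eqP; apply/negPn/negP => vw.
  have [oK vg vh] := oP v vX; have [_ wg wh] := oP w wX.
  rewrite -E in wg wh.
  have gE := edge_eq2 sg (ExE _ (gP _ oK).1) vg wg vw.
  have hE := edge_eq2 sg (ExE _ (RestEx _ (hP _ oK).1)) vh wh vw.
  by move: (ghne _ oK); rewrite gE hE eqxx.
have : #|[set o v | v in X]| <= #|K|.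
  by apply: subset_leq_card; apply/subsetP => B /imsetP[v vX ->]; case: (oP v vX).
by rewrite card_in_imset // leqNgt KX.
Qed.
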